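(* Let $T>0$, and let $u$ be a (sufficiently smooth) solution of the linear wave equation $\partial_t^2u-\Delta u=F(x,t)$ on $\mathbb R^3\times[0,T]$ with $u(\cdot,0)=u_0$, $\partial_tu(\cdot,0)=u_1$, where $u_0,u_1,F$ are radial in $x$. Suppose there are constants $R,A_1,B_1>0$ and $0<\alpha,\beta<1/2$ such that \[ |u_0(x)|\le A_1|x|^{-1-\alpha},\quad |F(x,t)|\le B_1|x|^{-3}(|x|-t)^{-\beta}\quad\text{whenever }|x|>R\ (\text{and }t\in[0,T]), \] \[ \int_{|x|>R}|x|^{1+2\alpha}|u_1(x)|^2\,dx\le A_1^2. \] Then there is a constant $C=C(\alpha,\beta)\ge1$ such that \[ |u(x,t)|\le C|x|^{-1}\big[A_1(|x|-t)^{-\alpha}+B_1(|x|-t)^{-\beta}\big]\qquad\text{for all }t\in[0,T],\ |x|>R+t. \] *)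

(* Defs.v *)
From Stdlib Require Import Reals Lra.
Open Scope R_scope.

(* Radial functions on R^3 (x t) are represented by their radial profiles
   g(r, t), r = |x| > 0, i.e. g(|x|,t) is the value at x. *)

Definition cont2 (g : R -> R -> R) (r t : R) : Prop :=
  forall eps, 0 < eps -> exists delta, 0 < delta /\
    forall r' t', Rabs (r' - r) < delta -> Rabs (t' - t) < delta ->
      Rabs (g r' t' - g r t) < eps.

Definition C2_profile (v vr vt vrr vrt vtt : R -> R -> R) : Prop :=
  forall r t, 0 < r ->
    derivable_pt_lim (fun s => v s t) r (vr r t) /\
    derivable_pt_lim (fun s => v r s) t (vt r t) /\
    derivable_pt_lim (fun s => vr s t) r (vrr r t) /\
    derivable_pt_lim (fun s => vr r s) t (vrt r t) /\
    derivable_pt_lim (fun s => vt s t) r (vrt r t) /\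
    derivable_pt_lim (fun s => vt r s) t (vtt r t) /\
    cont2 v r t /\ cont2 vr r t /\ cont2 vt r t /\
    cont2 vrr r t /\ cont2 vrt r t /\ cont2 vtt r t.

Definition radial_laplacian (vr vrr : R -> R -> R) (r t : R) : R :=
  vrr r t + 2 / r * vr r t.

(* Main.v *)
Require Import Defs.
From Stdlib Require Import Reals Lra.
From Coquelicot Require Import Coquelicot.
Open Scope R_scope.


Lemma mvt_bound (F F' G G' : R -> R) a b : a <= b ->
  (forall c, a <= c <= b -> derivable_pt_lim F c (F' c)) ->
  (forall c, a <= c <= b -> derivable_pt_lim G c (G' c)) ->
  (forall c, a <= c <= b -> Rabs (F' c) <= G' c) ->
  Rabs (F b - F a) <= G b - G a.
Proof.
intros hab hF hG hb. destruct (Req_dec a b) as [->|hne].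
- replace (F b - F b) with 0 by ring. rewrite Rabs_R0. lra.
- assert (hlt : a < b) by lra.
  destruct (MVT_cor2 (fun x => G x - F x) (fun x => G' x - F' x) a b hlt) as [c1 [e1 h1]].
  { intros c hc. apply derivable_pt_lim_minus; auto. }
  destruct (MVT_cor2 (fun x => G x + F x) (fun x => G' x + F' x) a b hlt) as [c2 [e2 h2]].
  { intros c hc. apply derivable_pt_lim_plus; auto. }
  assert (k1 := hb c1 ltac:(lra)). assert (k2 := hb c2 ltac:(lra)).
  revert k1 k2. unfold Rabs. destruct (Rcase_abs (F' c1)), (Rcase_abs (F' c2)), (Rcase_abs (F b - F a)); intros; nra.
Qed.

Lemma seg_mvt (f f' : R -> R) a b :
  (forall c, Rmin a b <= c <= Rmax a b -> derivable_pt_lim f c (f' c)) ->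
  exists c, Rmin a b <= c <= Rmax a b /\ f b - f a = f' c * (b - a).
Proof.
intros h. destruct (Rtotal_order a b) as [hl|[he|hg]].
- destruct (MVT_cor2 f f' a b hl) as [c [e hc]].
  { intros c hc. apply h. rewrite Rmin_left, Rmax_right; lra. }
  exists c. rewrite Rmin_left, Rmax_right by lra. split; [lra|exact e].
- subst. exists b. rewrite Rmin_left, Rmax_right by lra. split; [lra|ring].
- destruct (MVT_cor2 f f' b a hg) as [c [e hc]].
  { intros c hc. apply h. rewrite Rmin_right, Rmax_left; lra. }
  exists c. rewrite Rmin_right, Rmax_left by lra. split; [lra|]. 
  replace (f b - f a) with (-(f a - f b)) by ring. rewrite e. ring.
Qed.

Lemma lin_deriv c d x : derivable_pt_lim (fun y => c + d*y) x d.
Proof.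
intros eps he. exists (mkposreal 1 Rlt_0_1). intros h hh _.
replace ((c + d * (x + h) - (c + d * x)) / h - d) with 0 by (field; exact hh).
rewrite Rabs_R0; exact he.
Qed.

Lemma chain (phi phir phit : R -> R -> R) c1 d1 c2 d2 x :
  0 < c1 + d1*x ->
  (forall r' t', 0 < r' -> derivable_pt_lim (fun s => phi s t') r' (phir r' t')) ->
  derivable_pt_lim (fun s => phi (c1+d1*x) s) (c2+d2*x) (phit (c1+d1*x) (c2+d2*x)) ->
  cont2 phir (c1+d1*x) (c2+d2*x) ->
  derivable_pt_lim (fun y => phi (c1+d1*y) (c2+d2*y)) x
    (d1 * phir (c1+d1*x) (c2+d2*x) + d2 * phit (c1+d1*x) (c2+d2*x)).
Proof.
set (r := c1 + d1*x). set (t := c2 + d2*x). intros hr hdr hdt hc.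
assert (hG : derivable_pt_lim (fun y => phi r (c2 + d2*y)) x (phit r t * d2)).
{ apply (derivable_pt_lim_comp (fun y => c2 + d2*y) (fun s => phi r s)).
  - apply lin_deriv.
  - exact hdt. }
intros eps heps.
destruct (hG (eps/2) ltac:(lra)) as [dG hdG].
assert (hA : 0 < Rabs d1 + 1) by (pose proof (Rabs_pos d1); lra).
assert (hB : 0 < Rabs d1 + Rabs d2 + 1) by (pose proof (Rabs_pos d1); pose proof (Rabs_pos d2); lra).
destruct (hc (eps / 2 / (Rabs d1 + 1))) as [dc [hdc hdc']].
{ apply Rdiv_lt_0_compat; lra. }
assert (hd1 : 0 < dc / (Rabs d1 + Rabs d2 + 1)) by (apply Rdiv_lt_0_compat; lra).
assert (hd2 : 0 < r / (Rabs d1 + 1)) by (apply Rdiv_lt_0_compat; lra).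
set (d := Rmin dG (Rmin (dc / (Rabs d1 + Rabs d2 + 1)) (r / (Rabs d1 + 1)))).
assert (hd : 0 < d).
{ unfold d. apply Rmin_pos; [apply (cond_pos dG)|apply Rmin_pos; lra]. }
exists (mkposreal d hd). intros h hh0 hh. simpl in hh.
assert (h1 : Rabs h < dG) by (eapply Rlt_le_trans; [exact hh|apply Rmin_l]).
assert (h2 : Rabs h < dc / (Rabs d1 + Rabs d2 + 1)).
{ eapply Rlt_le_trans; [exact hh|]. unfold d. eapply Rle_trans; [apply Rmin_r|apply Rmin_l]. }
assert (h3 : Rabs h < r / (Rabs d1 + 1)).
{ eapply Rlt_le_trans; [exact hh|]. unfold d. eapply Rle_trans; [apply Rmin_r|apply Rmin_r]. }
specialize (hdG h hh0 h1).
assert (k1 : Rabs d1 * Rabs h < r).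
{ apply Rmult_lt_compat_r with (r := Rabs d1 + 1) in h3; [|lra].
  unfold Rdiv in h3. rewrite Rmult_assoc, Rinv_l in h3 by lra.
  pose proof (Rabs_pos h). nra. }
assert (k2 : (Rabs d1 + Rabs d2 + 1) * Rabs h < dc).
{ apply Rmult_lt_compat_r with (r := Rabs d1 + Rabs d2 + 1) in h2; [|lra].
  unfold Rdiv in h2. rewrite Rmult_assoc, Rinv_l in h2 by lra. lra. }
assert (k3 : Rabs d1 * Rabs h < dc) by (pose proof (Rabs_pos h); pose proof (Rabs_pos d2); nra).
assert (k4 : Rabs d2 * Rabs h < dc) by (pose proof (Rabs_pos h); pose proof (Rabs_pos d1); nra).
set (t' := c2 + d2 * (x + h)).
destruct (seg_mvt (fun s => phi s t') (fun s => phir s t') r (r + d1*h)) as [c [hcr hce]].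
{ intros c hcc. apply hdr.
  assert (Rabs (c - r) <= Rabs (d1*h)).
  { revert hcc. unfold Rmin, Rmax. destruct (Rle_dec r (r + d1*h)); intros;
    unfold Rabs; destruct (Rcase_abs (c - r)), (Rcase_abs (d1*h)); lra. }
  rewrite Rabs_mult in H. revert H. unfold Rabs at 1. destruct (Rcase_abs (c - r)); lra. }
assert (hcr' : Rabs (c - r) <= Rabs d1 * Rabs h).
{ rewrite <- Rabs_mult. revert hcr. unfold Rmin, Rmax. destruct (Rle_dec r (r + d1*h)); intros;
    unfold Rabs; destruct (Rcase_abs (c - r)), (Rcase_abs (d1*h)); lra. }
assert (hct : Rabs (t' - t) = Rabs d2 * Rabs h).
{ rewrite <- Rabs_mult. f_equal. unfold t', t. ring. }
specialize (hdc' c t' ltac:(lra) ltac:(lra)).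
assert (E : (phi (c1 + d1 * (x + h)) (c2 + d2 * (x + h)) - phi (c1 + d1 * x) (c2 + d2 * x)) / h
   - (d1 * phir r t + d2 * phit r t)
  = d1 * (phir c t' - phir r t) + ((phi r (c2 + d2 * (x + h)) - phi r (c2 + d2 * x)) / h - phit r t * d2)).
{ replace (c1 + d1 * (x + h)) with (r + d1*h) by (unfold r; ring).
  fold t'. fold r. fold t.
  replace (phi (r + d1 * h) t') with (phi r t' + phir c t' * (r + d1 * h - r)) by lra.
  field. exact hh0. }
cbv beta. unfold t'. rewrite E.
eapply Rle_lt_trans; [apply Rabs_triang|].
rewrite Rabs_mult.
assert (Rabs d1 * Rabs (phir c t' - phir r t) <= Rabs d1 * (eps / 2 / (Rabs d1 + 1))).
{ apply Rmult_le_compat_l; [apply Rabs_pos|lra]. }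
assert (Rabs d1 * (eps / 2 / (Rabs d1 + 1)) < eps/2).
{ unfold Rdiv. apply Rmult_lt_reg_r with (r := Rabs d1 + 1); [lra|].
  replace (Rabs d1 * (eps * / 2 * / (Rabs d1 + 1)) * (Rabs d1 + 1)) with (Rabs d1 * (eps * /2)) by (field; lra).
  nra. }
unfold t' in *. lra.
Qed.

Lemma dplus f g x lf lg : derivable_pt_lim f x lf -> derivable_pt_lim g x lg ->
  derivable_pt_lim (fun y => f y + g y) x (lf + lg).
Proof. intros. exact (derivable_pt_lim_plus f g x lf lg H H0). Qed.
Lemma dminus f g x lf lg : derivable_pt_lim f x lf -> derivable_pt_lim g x lg ->
  derivable_pt_lim (fun y => f y - g y) x (lf - lg).
Proof. intros. exact (derivable_pt_lim_minus f g x lf lg H H0). Qed.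
Lemma dmult f g x lf lg : derivable_pt_lim f x lf -> derivable_pt_lim g x lg ->
  derivable_pt_lim (fun y => f y * g y) x (lf * g x + f x * lg).
Proof. intros. exact (derivable_pt_lim_mult f g x lf lg H H0). Qed.
Lemma dscal c f x lf : derivable_pt_lim f x lf ->
  derivable_pt_lim (fun y => c * f y) x (c * lf).
Proof. intros. exact (derivable_pt_lim_scal f c x lf H). Qed.
Lemma deq f x l l' : derivable_pt_lim f x l -> l = l' -> derivable_pt_lim f x l'.
Proof. intros; subst; auto. Qed.
Lemma dext f g x l : (forall y, f y = g y) -> derivable_pt_lim f x l -> derivable_pt_lim g x l.
Proof.
intros e h eps he. destruct (h eps he) as [d hd]. exists d. intros k hk hk'.
rewrite <- !e. apply hd; auto. Qed.

Lemma rpow_pos x y : 0 < Rpower x y.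
Proof. unfold Rpower. apply exp_pos. Qed.

Lemma prim_deriv (h : R -> R) R0 x : 0 < R0 -> 0 < x ->
  (forall z, 0 < z -> continuous h z) ->
  derivable_pt_lim (fun y => RInt h R0 y) x (h x).
Proof.
intros hR hx hc. apply is_derive_Reals. apply (is_derive_RInt h (fun y => RInt h R0 y) R0).
2: apply hc; exact hx.
exists (mkposreal x hx). intros y hy. apply (RInt_correct (V:=R_CompleteNormedModule)). apply (ex_RInt_continuous (V:=R_CompleteNormedModule)).
intros z hz. apply hc.
assert (0 < y).
{ revert hy. unfold ball; simpl. unfold AbsRing_ball, abs, minus, plus, opp; simpl.
  unfold Rabs. destruct (Rcase_abs _); lra. }
assert (0 < Rmin R0 y) by (apply Rmin_pos; lra). lra.
Qed.

Lemma Q_deriv v vr vt vrr vrt vtt (H : C2_profile v vr vt vrr vrt vtt) xi eta :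
  0 < xi/2 + /2*eta ->
  derivable_pt_lim (fun y => v (xi/2 + /2*y) (xi/2 + -/2*y)
     + (xi/2 + /2*y) * vr (xi/2 + /2*y) (xi/2 + -/2*y)
     + (xi/2 + /2*y) * vt (xi/2 + /2*y) (xi/2 + -/2*y)) eta
   (vr (xi/2 + /2*eta) (xi/2 + -/2*eta) + (xi/2 + /2*eta)/2 *
     (vrr (xi/2 + /2*eta) (xi/2 + -/2*eta) - vtt (xi/2 + /2*eta) (xi/2 + -/2*eta))).
Proof.
intros hr.
destruct (H _ (xi/2 + -/2*eta) hr) as (_ & h2 & _ & h4 & _ & h6 & _ & h8 & _ & h10 & h11 & _).
assert (cv := chain v vr vt (xi/2) (/2) (xi/2) (-/2) eta hr
  (fun r' t' h => proj1 (H r' t' h)) h2 h8).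
assert (cvr := chain vr vrr vrt (xi/2) (/2) (xi/2) (-/2) eta hr
  (fun r' t' h => proj1 (proj2 (proj2 (H r' t' h)))) h4 h10).
assert (cvt := chain vt vrt vtt (xi/2) (/2) (xi/2) (-/2) eta hr
  (fun r' t' h => proj1 (proj2 (proj2 (proj2 (proj2 (H r' t' h)))))) h6 h11).
eapply deq.
- apply dplus; [apply dplus|].
  + exact cv.
  + apply dmult; [apply lin_deriv|exact cvr].
  + apply dmult; [apply lin_deriv|exact cvt].
- cbv beta. field.
Qed.

Definition Wf (v vr vt : R -> R -> R) xi eta :=
  v (xi/2 + /2*eta) (xi/2 + -/2*eta)
     + (xi/2 + /2*eta) * vr (xi/2 + /2*eta) (xi/2 + -/2*eta)
     + (xi/2 + /2*eta) * vt (xi/2 + /2*eta) (xi/2 + -/2*eta).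

Lemma rpow_m3 x : 0 < x -> Rpower x (-3) = / x^3.
Proof.
intros hx. replace (-3) with (-(3)) by ring. rewrite Rpower_Ropp. f_equal. replace 3 with (INR 3) by (simpl; ring).
apply Rpower_pow; exact hx.
Qed.

Lemma rpow_m1 x y : 0 < x -> Rpower x (y - 1) = Rpower x y / x.
Proof.
intros hx. replace (y - 1) with (y + - (1)) by ring. rewrite Rpower_plus, Rpower_Ropp, Rpower_1 by exact hx. reflexivity.
Qed.

Lemma inner_bound v vr vt vrr vrt vtt (f : R -> R -> R) T R0 B1 beta
  (H : C2_profile v vr vt vrr vrt vtt) :
  0 < beta < 1/2 -> 0 < B1 -> 0 < R0 ->
  (forall r t, 0 < r -> 0 <= t <= T -> vtt r t - radial_laplacian vr vrr r t = f r t) ->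
  (forall r t, R0 < r -> 0 <= t <= T -> t < r ->
        Rabs (f r t) <= B1 * Rpower r (-3) * Rpower (r - t) (- beta)) ->
  forall a xi, R0 < a -> a <= xi -> xi - a <= 2*T ->
  Rabs (Wf v vr vt xi xi - Wf v vr vt xi a) <= 2*B1/(1-beta) * (Rpower xi (-beta) / xi).
Proof.
intros hb hB hR hpde hf a xi ha haxi hT.
assert (hxi : 0 < xi) by lra.
eapply Rle_trans.
{ apply (mvt_bound (Wf v vr vt xi)
    (fun eta => - ((xi/2 + /2*eta)/2 * f (xi/2 + /2*eta) (xi/2 + -/2*eta)))
    (fun eta => 2*B1/xi^2/(1-beta) * Rpower eta (1-beta))
    (fun eta => 2*B1/xi^2 * Rpower eta (-beta)) a xi haxi).
  - intros c hc. eapply deq. apply (Q_deriv v vr vt vrr vrt vtt H xi c). lra.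
    rewrite <- hpde by lra. unfold radial_laplacian. field. lra.
  - intros c hc. eapply deq. apply dscal. apply derivable_pt_lim_power. lra.
    replace (1 - beta - 1) with (-beta) by ring. field. lra.
  - intros c hc.
    set (rho := xi/2 + /2*c). set (s := xi/2 + -/2*c).
    assert (hrho : xi/2 <= rho) by (unfold rho; lra).
    assert (hf' := hf rho s ltac:(unfold rho; lra) ltac:(unfold s; lra) ltac:(unfold rho, s; lra)).
    replace (rho - s) with c in hf' by (unfold rho, s; field).
    rewrite rpow_m3 in hf' by lra.
    rewrite Rabs_Ropp, Rabs_mult.
    rewrite (Rabs_right (rho/2)) by lra.
    assert (hX := rpow_pos c (-beta)).
    apply Rle_trans with (rho/2 * (B1 * / rho ^ 3 * Rpower c (- beta))).
    { apply Rmult_le_compat_l; lra. }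
    replace (rho / 2 * (B1 * / rho ^ 3 * Rpower c (- beta))) with
      (B1 * Rpower c (-beta) * / (2 * rho^2)) by (field; lra).
    replace (2 * B1 / xi ^ 2 * Rpower c (- beta)) with
      (B1 * Rpower c (-beta) * / (xi^2 / 2)) by (field; lra).
    apply Rmult_le_compat_l. apply Rmult_le_pos; lra.
    apply Rinv_le_contravar. apply Rdiv_lt_0_compat; [nra|lra]. nra. }
assert (hG := rpow_pos a (1-beta)).
assert (0 <= 2 * B1 / xi ^ 2 / (1 - beta) * Rpower a (1 - beta)).
{ apply Rmult_le_pos; [|lra]. apply Rlt_le. apply Rdiv_lt_0_compat; [|lra].
  apply Rdiv_lt_0_compat; [lra|nra]. }
replace (Rpower xi (1 - beta)) with (Rpower xi (-beta + 1)) by (f_equal; ring).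
rewrite Rpower_plus, Rpower_1 by lra.
replace (2 * B1 / xi ^ 2 / (1 - beta) * (Rpower xi (- beta) * xi)) with
  (2 * B1 / (1 - beta) * (Rpower xi (- beta) / xi)) by (field; lra).
lra.
Qed.

Theorem lemma4p1 :
  forall alpha beta : R,
    0 < alpha < 1/2 -> 0 < beta < 1/2 ->
  exists C : R, 1 <= C /\
  forall (T R0 A1 B1 : R) (u0 u1 : R -> R) (f v vr vt vrr vrt vtt : R -> R -> R),
    0 < T -> 0 < R0 -> 0 < A1 -> 0 < B1 ->
    C2_profile v vr vt vrr vrt vtt ->
    (forall r t, 0 < r -> 0 <= t <= T ->
        vtt r t - radial_laplacian vr vrr r t = f r t) ->
    (forall r, 0 < r -> v r 0 = u0 r /\ vt r 0 = u1 r) ->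
    (forall r, R0 < r -> Rabs (u0 r) <= A1 * Rpower r (-1 - alpha)) ->
    (forall r t, R0 < r -> 0 <= t <= T -> t < r ->
        Rabs (f r t) <= B1 * Rpower r (-3) * Rpower (r - t) (- beta)) ->
    (forall (M : R)
       (pr : Riemann_integrable (fun r => Rpower r (3 + 2 * alpha) * (u1 r)^2) R0 M),
        R0 < M -> 4 * PI * RiemannInt pr <= A1 ^ 2) ->
    forall r t, 0 <= t <= T -> R0 + t < r ->
      Rabs (v r t) <=
        C / r * (A1 * Rpower (r - t) (- alpha) + B1 * Rpower (r - t) (- beta)).
Proof.
intros alpha beta hal hbe.
assert (hia : 0 < /(8*alpha)) by (apply Rinv_0_lt_compat; lra).
assert (hib : 0 < /(beta*(1-beta))) by (apply Rinv_0_lt_compat; nra).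
exists (2 + /(8*alpha) + /(beta*(1-beta))). split; [lra|].
intros T R0 A1 B1 u0 u1 f v vr vt vrr vrt vtt hT hR hA hB hC2 hpde hinit hu0 hf hint r t ht hrt.
set (a := r - t). set (b := r + t).
assert (ha0 : R0 < a) by (unfold a; lra). assert (hab : a <= b) by (unfold a,b; lra).
set (X := Rpower a (-alpha)). set (Y := Rpower a (-beta)).
assert (hX : 0 < X) by apply rpow_pos. assert (hY : 0 < Y) by apply rpow_pos.
set (lam := X / A1).
assert (hlam : 0 < lam) by (apply Rdiv_lt_0_compat; lra).
set (h := fun z => Rpower z (3+2*alpha) * (vt z 0)^2).
set (K := fun y => (a/2 + /2*y) * v (a/2 + /2*y) (-a/2 + /2*y) - /2 * (y * v y 0)).
set (G2 := fun y => lam/4 * RInt h R0 y - /(8*alpha*lam) * Rpower y (-(2*alpha))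
                   - B1/(beta*(1-beta)) * Rpower y (-beta)).
set (G2' := fun y => lam/4 * h y + /(4*lam) * (Rpower y (-(2*alpha)) / y)
                   + B1/(1-beta) * (Rpower y (-beta)/y)).
set (K' := fun y => /2 * (Wf v vr vt y a - Wf v vr vt y y) + /2 * (y * vt y 0)).
assert (hcont : forall z, 0 < z -> continuous h z).
{ intros z hz. apply (ex_derive_continuous (K:=R_AbsRing) (V:=R_NormedModule) h z). eexists. apply is_derive_Reals. unfold h.
  apply dmult. apply derivable_pt_lim_power; lra.
  apply (derivable_pt_lim_comp (fun y => vt y 0) (fun x => x^2)).
  apply (hC2 z 0 hz). apply derivable_pt_lim_pow. }
assert (hK : forall c, a <= c <= b -> derivable_pt_lim K c (K' c)).
{ intros c hc. assert (hp : 0 < a/2 + /2*c) by lra.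
  destruct (hC2 _ (-a/2 + /2*c) hp) as (_ & h2 & _ & _ & _ & _ & _ & h8 & _).
  unfold K. eapply deq.
  - apply dminus. apply dmult. apply lin_deriv.
    apply (chain v vr vt (a/2) (/2) (-a/2) (/2) c hp (fun r' t' h => proj1 (hC2 r' t' h)) h2 h8).
    apply dscal. apply dmult. apply derivable_pt_lim_id. apply (proj1 (hC2 c 0 ltac:(lra))).
  - unfold K', Wf.
    replace (c/2 + /2*a) with (a/2 + /2*c) by field.
    replace (c/2 + -/2*a) with (-a/2 + /2*c) by field.
    replace (c/2 + /2*c) with c by field.
    replace (c/2 + -/2*c) with 0 by field.
    ring. }
assert (hGd : forall c, a <= c <= b -> derivable_pt_lim G2 c (G2' c)).
{ intros c hc. assert (hc0 : 0 < c) by lra. unfold G2. eapply deq.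
  - apply dminus. apply dminus. apply dscal. apply (prim_deriv h R0 c hR hc0 hcont).
    apply dscal. apply derivable_pt_lim_power; lra.
    apply dscal. apply derivable_pt_lim_power; lra.
  - rewrite !rpow_m1 by lra. unfold G2'. field. repeat split; lra. }
assert (hbd : forall c, a <= c <= b -> Rabs (K' c) <= G2' c).
{ intros c hc. assert (hc0 : 0 < c) by lra.
  assert (ib := inner_bound v vr vt vrr vrt vtt f T R0 B1 beta hC2 hbe hB hR hpde hf a c
     ha0 (proj1 hc) ltac:(unfold a, b in *; lra)).
  rewrite Rabs_minus_sym in ib.
  set (q := Rpower c (1 + 2*alpha)).
  assert (hq : 0 < q) by apply rpow_pos.
  assert (E1 : Rpower c (3 + 2*alpha) = c^2 * q).
  { unfold q. replace (3 + 2*alpha) with (2 + (1 + 2*alpha)) by ring.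
    rewrite Rpower_plus. f_equal. replace 2 with (INR 2) at 1 by (simpl; ring).
    apply Rpower_pow; lra. }
  assert (E2 : Rpower c (-(2*alpha)) / c = / q).
  { unfold q. rewrite Rpower_Ropp, Rpower_plus, Rpower_1 by lra. field;
    assert (0 < Rpower c (2*alpha)) by apply rpow_pos; repeat split; lra. }
  unfold K', G2', h. rewrite E1, E2.
  set (u := vt c 0). set (z := Rabs (c*u)).
  replace (c^2 * q * u^2) with (q * z^2) by (unfold z; rewrite pow2_abs; ring).
  assert (hz : /2 * z <= lam / 4 * (q * z^2) + / (4 * lam) * / q).
  { assert (0 <= (lam*q*z - 1)^2 / (4*lam*q)).
    { apply Rmult_le_pos. apply pow2_ge_0. apply Rlt_le, Rinv_0_lt_compat. nra. }
    assert (lam / 4 * (q * z^2) + / (4 * lam) * / q - /2 * z = (lam*q*z - 1)^2 / (4*lam*q))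
      by (field; lra).
    lra. }
  eapply Rle_trans; [apply Rabs_triang|].
  rewrite !Rabs_mult. rewrite (Rabs_right (/2)) by lra. rewrite <- Rabs_mult. fold z. lra. }
assert (hM := mvt_bound K K' G2 G2' a b hab hK hGd hbd).
assert (EKb : K b = r * v r t - /2 * (b * v b 0)).
{ unfold K. replace (a/2 + /2*b) with r by (unfold a,b; field).
  replace (-a/2 + /2*b) with t by (unfold a,b; field). reflexivity. }
assert (EKa : K a = /2 * (a * v a 0)).
{ unfold K. cbv beta. replace (a/2 + /2*a) with a by field. replace (-a/2 + /2*a) with (0:R) by (unfold a; field). field. }
assert (hexh : forall y, R0 <= y -> ex_RInt h R0 y).
{ intros y hy. apply (ex_RInt_continuous (V:=R_CompleteNormedModule)). intros z hz. apply hcont.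
  assert (R0 <= Rmin R0 y) by (apply Rmin_glb; lra). lra. }
assert (hPa : 0 <= RInt h R0 a).
{ apply RInt_ge_0. lra. apply hexh; lra. intros x hx. unfold h. apply Rmult_le_pos.
  apply Rlt_le, rpow_pos. apply pow2_ge_0. }
assert (hPb : 4 * PI * RInt h R0 b <= A1^2).
{ set (g := fun r => Rpower r (3 + 2 * alpha) * (u1 r)^2).
  assert (hext : forall x, Rmin R0 b < x < Rmax R0 b -> h x = g x).
  { intros x hx. rewrite Rmin_left, Rmax_right in hx by lra. unfold h, g.
    rewrite (proj2 (hinit x ltac:(lra))). reflexivity. }
  assert (exg : ex_RInt g R0 b).
  { apply (ex_RInt_ext h); [exact hext| apply hexh; lra]. }
  rewrite (RInt_ext h g R0 b hext). rewrite (RInt_Reals g R0 b (ex_RInt_Reals_0 _ _ _ exg)).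
  apply hint. lra. }
assert (hu0y : forall y, a <= y -> Rabs (y * v y 0) <= A1 * X).
{ intros y hy.
  rewrite (proj1 (hinit y ltac:(lra))), Rabs_mult, (Rabs_right y) by lra.
  specialize (hu0 y ltac:(lra)).
  assert (Ey: y * Rpower y (-1 - alpha) = Rpower y (-alpha)).
  { replace (-1 - alpha) with (-alpha + -(1)) by ring.
    rewrite Rpower_plus, (Rpower_Ropp y 1), Rpower_1 by lra. field. lra. }
  assert (hpa : Rpower y (-alpha) <= X).
  { unfold X. rewrite !Rpower_Ropp. apply Rinv_le_contravar. apply rpow_pos.
    apply Rle_Rpower_l; lra. }
  apply Rle_trans with (y * (A1 * Rpower y (-1-alpha))). apply Rmult_le_compat_l; lra.
  replace (y * (A1 * Rpower y (-1-alpha))) with (A1 * (y * Rpower y (-1-alpha))) by ring.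
  rewrite Ey. apply Rmult_le_compat_l; lra. }
assert (hua := hu0y a ltac:(lra)). assert (hub := hu0y b hab).
assert (EX2 : Rpower a (-(2*alpha)) = X^2).
{ unfold X. replace (-(2*alpha)) with (-alpha + -alpha) by ring. rewrite Rpower_plus. ring. }
assert (hG2 : G2 b - G2 a <= lam/4 * RInt h R0 b + /(8*alpha*lam) * X^2 + B1/(beta*(1-beta)) * Y).
{ unfold G2. fold Y. rewrite EX2.
  assert (0 < /(8*alpha*lam)) by (apply Rinv_0_lt_compat; nra).
  assert (0 < B1/(beta*(1-beta))) by (apply Rdiv_lt_0_compat; nra).
  assert (0 <= /(8*alpha*lam) * Rpower b (-(2*alpha))) by (apply Rmult_le_pos; [lra|apply Rlt_le, rpow_pos]).
  assert (0 <= B1/(beta*(1-beta)) * Rpower b (-beta)) by (apply Rmult_le_pos; [lra|apply Rlt_le, rpow_pos]).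
  assert (0 <= lam/4 * RInt h R0 a) by (apply Rmult_le_pos; lra).
  lra. }
assert (hP8 : lam/4 * RInt h R0 b <= A1 * X / 32).
{ assert (hpi := PI2_1).
  assert (8 * RInt h R0 b <= A1^2).
  { destruct (Rle_dec 0 (RInt h R0 b)). nra. nra. }
  unfold lam. replace (X / A1 / 4 * RInt h R0 b) with (X / A1 / 32 * (8 * RInt h R0 b)) by (field; lra).
  apply Rle_trans with (X / A1 / 32 * A1^2). apply Rmult_le_compat_l.
  apply Rlt_le, Rdiv_lt_0_compat; [apply Rdiv_lt_0_compat|]; lra. lra.
  right. field. lra. }
assert (Ea : /(8*alpha*lam) * X^2 = /(8*alpha) * (A1 * X)).
{ unfold lam. field. repeat split; lra. }
assert (Eb : B1/(beta*(1-beta)) * Y = /(beta*(1-beta)) * (B1 * Y)).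
{ field. split; lra. }
assert (hrv : Rabs (r * v r t) <= (2 + /(8*alpha) + /(beta*(1-beta))) * (A1 * X + B1 * Y)).
{ replace (r * v r t) with ((K b - K a) + /2 * (b * v b 0) + /2 * (a * v a 0))
    by (rewrite EKb, EKa; ring).
  assert (0 < A1 * X) by nra. assert (0 < B1 * Y) by nra.
  assert (0 <= /(8*alpha) * (B1 * Y)) by nra.
  assert (0 <= /(beta*(1-beta)) * (A1 * X)) by nra.
  eapply Rle_trans. apply Rabs_triang. eapply Rle_trans. apply Rplus_le_compat_r. apply Rabs_triang.
  rewrite (Rabs_mult (/2) (b * v b 0)), (Rabs_mult (/2) (a * v a 0)).
  rewrite (Rabs_right (/2)) by lra.
  lra. }
rewrite Rabs_mult, (Rabs_right r) in hrv by lra.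
apply Rmult_le_reg_l with r. lra.
replace (r * ((2 + / (8 * alpha) + / (beta * (1 - beta))) / r * (A1 * X + B1 * Y)))
  with ((2 + / (8 * alpha) + / (beta * (1 - beta))) * (A1 * X + B1 * Y)) by (field; lra).
exact hrv.
Qed.
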